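(* Let $n\ge2$ and $\epsilon>0$. For every $\epsilon$-optimal vector strategy $\{u_r\},\{v_j\}$ for the game $\mathrm{CHSH}(n)$, the vectors $v_1,\dots,v_n$ span a real subspace of dimension at least $n-8\sqrt2\,n(n-1)\epsilon$; in particular the strategy lives in a space of at least that dimension.
   Context: $\mathrm{CHSH}(n)$ is the $n(n-1)\times n$ XOR game whose columns are indexed by $\{1,\dots,n\}$ and which has, for each pair $1\le i<j\le n$, the two rows $(e_i-e_j)/(2n(n-1))$ and $(e_i+e_j)/(2n(n-1))$ ($e_i$ the standard basis row vectors). Its quantum success bias is $1/\sqrt2$. A vector strategy for an $m\times n$ game with cost matrix $G$ is a pair of families of unit vectors $u_1,\dots,u_m$, $v_1,\dots,v_n$ in some $\mathbb{R}^N$, with bias $\sum G_{rj}u_r\cdot v_j$; it is $\epsilon$-optimal if its bias is at least $\varepsilon_q(G)-\epsilon$, where $\varepsilon_q(G)$ is the maximum bias over vector strategies. *)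

(* Defs.v *)
From HB Require Import structures.
From mathcomp Require Import all_boot all_order all_algebra.
Set Implicit Arguments. Unset Strict Implicit. Unset Printing Implicit Defensive.
Import Order.TTheory GRing.Theory Num.Theory.
Local Open Scope ring_scope.

Definition dotv (R : rcfType) (N : nat) (x y : 'rV[R]_N) : R :=
  \sum_(k < N) x 0 k * y 0 k.

(* An XOR game with row index finite type rT and n columns: cost matrix
   G : rT -> 'I_n -> R (G r j = G_{rj}). *)

Definition vector_strategy (R : rcfType) (rT : finType) (n N : nat)
  (u : rT -> 'rV[R]_N) (v : 'I_n -> 'rV[R]_N) : Prop :=
  (forall r, dotv (u r) (u r) = 1) /\ (forall j, dotv (v j) (v j) = 1).

Definition bias (R : rcfType) (rT : finType) (n N : nat)
  (G : rT -> 'I_n -> R) (u : rT -> 'rV[R]_N) (v : 'I_n -> 'rV[R]_N) : R :=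
  \sum_(r : rT) \sum_(j < n) G r j * dotv (u r) (v j).

Definition achievable_bias (R : rcfType) (rT : finType) (n : nat)
  (G : rT -> 'I_n -> R) (b : R) : Prop :=
  exists N (u : rT -> 'rV[R]_N) (v : 'I_n -> 'rV[R]_N),
    vector_strategy u v /\ b = bias G u v.

(* q = eps_q(G): the supremum (least upper bound) of the biases of all
   vector strategies (the paper: the maximum, which in particular is the lub). *)
Definition is_quantum_bias (R : rcfType) (rT : finType) (n : nat)
  (G : rT -> 'I_n -> R) (q : R) : Prop :=
  (forall b, achievable_bias G b -> b <= q) /\
  (forall q', (forall b, achievable_bias G b -> b <= q') -> q <= q').

Definition eps_optimal (R : rcfType) (rT : finType) (n N : nat)
  (G : rT -> 'I_n -> R) (q eps : R)
  (u : rT -> 'rV[R]_N) (v : 'I_n -> 'rV[R]_N) : Prop :=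
  vector_strategy u v /\ q - eps <= bias G u v.

(* Rows of CHSH(n): triples (i, j, s) with i < j; s = false is the row
   (e_i - e_j)/(2n(n-1)), s = true is the row (e_i + e_j)/(2n(n-1)).
   There are exactly n(n-1) of them. *)
Definition chsh_pred (n : nat) : pred ('I_n * 'I_n * bool) :=
  fun p => (p.1.1 < p.1.2)%N.
Definition chsh_row (n : nat) : finType := {p : 'I_n * 'I_n * bool | @chsh_pred n p}.

Definition CHSH (R : rcfType) (n : nat) : chsh_row n -> 'I_n -> R :=
  fun p k =>
    let i := (val p).1.1 in let j := (val p).1.2 in let s := (val p).2 in
    ((k == i)%:R + (if s then 1 else -1) * (k == j)%:R)
      / (2 * n * (n - 1))%:R.

Definition rows_mx (R : rcfType) (n N : nat) (v : 'I_n -> 'rV[R]_N) : 'M[R]_(n, N) :=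
  \matrix_(j < n) v j.

Arguments chsh_pred n p : clear implicits.
Arguments CHSH R n p k : clear implicits.

(* Main.v *)
Require Import Defs.
From HB Require Import structures.
From mathcomp Require Import all_boot all_order all_algebra.
From Stdlib Require Import Ring.
Import Order.TTheory GRing.Theory Num.Theory.
Local Open Scope ring_scope.
Set Implicit Arguments. Unset Strict Implicit.

Section Aux.
Variable R : rcfType.
Definition radd (x y : R) : R := x + y.
Definition rmul (x y : R) : R := x * y.
Definition ropp (x : R) : R := - x.
Definition rsub (x y : R) : R := radd x (ropp y).
Definition rzero : R := 0.
Definition rone : R := 1.
Lemma RRT : ring_theory rzero rone radd rmul rsub ropp (@eq R).
Proof. rewrite /rzero /rone /radd /rmul /rsub /ropp. split=> *; rewrite ?(add0r, mul1r, mulrDl) //; try exact: addrC; try exact: addrA; try exact: mulrC; try exact: mulrA; exact: subrr. Qed.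
Add Ring RR : RRT.
Ltac rring := rewrite -?[(_ * _)%R]/(rmul _ _) -?[(_ + _)%R]/(radd _ _) -?[(- _)%R]/(ropp _) -?[0%R]/rzero -?[1%R]/rone; match goal with |- @eq _ ?x ?y => change (@eq R x y) end; ring.
Lemma sq_le (x y : R) : 0 <= y -> x * x <= y * y -> x <= y.
Proof.
move=> y0 h; case: (lerP x 0) => [x0|x0]; first exact: le_trans x0 y0.
by rewrite -(ler_pXn2r (n:=2)) ?nnegrE ?(ltW x0) // !expr2.
Qed.

Lemma sqrt_sq (x : R) : 0 <= x -> Num.sqrt x * Num.sqrt x = x.
Proof. by move=> x0; rewrite -expr2 sqr_sqrtr. Qed.

Lemma key_ineq (c : R) : 0 <= 2 - 2 * c -> 0 <= 2 + 2 * c ->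
  Num.sqrt 2 * (c * c) <= 4 * ((Num.sqrt 2 - Num.sqrt (2 + 2 * c)) + (Num.sqrt 2 - Num.sqrt (2 - 2 * c))).
Proof.
move=> h1 h2.
set t := Num.sqrt 2; set a := Num.sqrt (2 - 2 * c); set b := Num.sqrt (2 + 2 * c).
have t0 : 0 <= t := sqrtr_ge0 _.
have F0 : (0:R) <= 1 + 1 by rewrite addr_ge0 ?ler01.
have a0 : 0 <= a := sqrtr_ge0 _.
have b0 : 0 <= b := sqrtr_ge0 _.
have tt : t * t = 1 + 1 by rewrite sqrt_sq.
have aa : a * a = (1 + 1) - (1 + 1) * c by rewrite sqrt_sq.
have bb : b * b = (1 + 1) + (1 + 1) * c by rewrite sqrt_sq.
have e4 : (4:R) = (1+1)*(1+1) by rewrite -(natrM R 2 2).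
rewrite e4.
set s := a + b.
have s0 : 0 <= s by rewrite addr_ge0.
have st : s <= (1+1) * t.
  apply: sq_le; first by rewrite mulr_ge0 // addr_ge0.
  rewrite -subr_ge0.
  have -> : ((1 + 1) * t * ((1 + 1) * t) - s * s) = ((a - b) * (a - b) + ((1+1)*(1+1)*(t*t) - (1+1)*(a * a + b * b))) by rewrite /s; rring.
  rewrite tt aa bb.
  have -> : (1 + 1) * (1 + 1) * (1 + 1) - (1 + 1) * (1 + 1 - (1 + 1) * c + (1 + 1 + (1 + 1) * c)) = (0:R) by rring.
  by rewrite addr0 -expr2 sqr_ge0.
have ds : (1+1)*(1+1)*(1+1)*(1+1)*(c*c) = (a-b)*(a-b)*(s*s).
  have -> : (a-b)*(a-b)*(s*s) = (a*a - b*b)*(a*a-b*b) by rewrite /s; rring.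
  rewrite aa bb; rring.
have dd : (a-b)*(a-b) = ((1+1)*t - s)*((1+1)*t + s).
  have -> : ((1+1)*t - s)*((1+1)*t + s) = (1+1)*(1+1)*(t*t) - s*s by rring.
  rewrite tt /s.
  have -> : (a-b)*(a-b) = (1+1)*(a*a+b*b) - (a+b)*(a+b) by rring.
  rewrite aa bb; rring.
have g0 : 0 <= (1+1)*t - s by rewrite subr_ge0.
have ss : s * s <= (1+1)*t*((1+1)*t) by apply: ler_pM.
have s2 : (1+1)*t + s <= (1+1)*(1+1)*t.
  have -> : (1+1)*(1+1)*t = (1+1)*t + (1+1)*t by rring.
  by rewrite lerD2l.
have big : t * (s * s) * ((1+1)*t + s) <= (1+1)*(1+1)*(1+1)*(1+1)*(1+1)*(1+1).
  apply: (le_trans (y := t * ((1+1)*t*((1+1)*t)) * ((1+1)*(1+1)*t))).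
    apply: ler_pM.
    - by rewrite mulr_ge0 // mulr_ge0.
    - by rewrite addr_ge0 // mulr_ge0.
    - by apply: ler_wpM2l.
    - exact: s2.
  have -> : t * ((1 + 1) * t * ((1 + 1) * t)) * ((1 + 1) * (1 + 1) * t) = (1+1)*(1+1)*(1+1)*(1+1)*((t*t)*(t*t)) by rring.
  by rewrite tt !mulrA.
have key : (1+1)*(1+1)*(1+1)*(1+1) * ((1 + 1) * (1 + 1) * (t - b + (t - a)) - t * (c * c))
   = ((1+1)*t - s) * ((1+1)*(1+1)*(1+1)*(1+1)*(1+1)*(1+1) - t * (s * s) * ((1+1)*t + s)).
  have -> : (1+1)*(1+1)*(1+1)*(1+1) * ((1 + 1) * (1 + 1) * (t - b + (t - a)) - t * (c * c))
     = (1+1)*(1+1)*(1+1)*(1+1)*(1+1)*(1+1) * ((1+1)*t - s) - t * ((1+1)*(1+1)*(1+1)*(1+1)*(c*c)) by rewrite /s; rring.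
  rewrite ds dd; rring.
rewrite -subr_ge0.
have h16 : (0:R) < (1+1)*(1+1)*(1+1)*(1+1) by rewrite !mulr_gt0 ?addr_gt0 ?ltr01.
rewrite -(pmulr_rge0 _ h16) key.
by rewrite mulr_ge0 // subr_ge0.
Qed.

Section Dot.
Variable N : nat.
Implicit Types x y z u w : 'rV[R]_N.
Lemma dotC x y : dotv x y = dotv y x.
Proof. by apply: eq_bigr => k _; rewrite mulrC. Qed.
Lemma dotDr x y z : dotv x (y + z) = dotv x y + dotv x z.
Proof. by rewrite /dotv -big_split; apply: eq_bigr => k _; rewrite mxE mulrDr. Qed.
Lemma dotZr x a y : dotv x (a *: y) = a * dotv x y.
Proof. by rewrite /dotv mulr_sumr; apply: eq_bigr => k _; rewrite mxE mulrCA. Qed.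
Lemma dotNr x y : dotv x (- y) = - dotv x y.
Proof. by rewrite -scaleN1r dotZr mulN1r. Qed.
Lemma dotBr x y z : dotv x (y - z) = dotv x y - dotv x z.
Proof. by rewrite dotDr dotNr. Qed.
Lemma dotDl x y z : dotv (y + z) x = dotv y x + dotv z x.
Proof. by rewrite dotC dotDr !(dotC x). Qed.
Lemma dotZl x a y : dotv (a *: y) x = a * dotv y x.
Proof. by rewrite dotC dotZr dotC. Qed.
Lemma dotBl x y z : dotv (y - z) x = dotv y x - dotv z x.
Proof. by rewrite dotC dotBr !(dotC x). Qed.
Lemma dot_ge0 x : 0 <= dotv x x.
Proof. by apply: sumr_ge0 => k _; rewrite -expr2 sqr_ge0. Qed.

Lemma dot_CS u w : dotv u u = 1 -> dotv u w <= Num.sqrt (dotv w w).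
Proof.
move=> hu; set k := dotv u w.
have h := dot_ge0 (w - k *: u).
rewrite dotBl !dotBr !dotZl !dotZr hu (dotC w u) -/k in h.
have hk : k * k <= dotv w w.
  rewrite -subr_ge0; move: h.
  suff -> : dotv w w - k * k - (k * k - k * (k * 1)) = dotv w w - k * k by [].
  rring.
apply: (le_trans (ler_norm k)).
by rewrite -sqrtr_sqr expr2 ler_wsqrtr.
Qed.
End Dot.

Lemma trE m p (X : 'M[R]_(m, p)) (Y : 'M[R]_(p, m)) :
  \tr (X *m Y) = \sum_i \sum_j X i j * Y j i.
Proof. by rewrite /mxtrace; apply: eq_bigr => i _; rewrite mxE. Qed.

Lemma CS (I : finType) (f g : I -> R) :
  (\sum_i f i * g i) * (\sum_i f i * g i) <= (\sum_i f i * f i) * (\sum_i g i * g i).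
Proof.
set a := \sum_i f i * f i; set b := \sum_i g i * g i; set c := \sum_i f i * g i.
have b0 : 0 <= b by apply: sumr_ge0 => i _; rewrite -expr2 sqr_ge0.
have a0 : 0 <= a by apply: sumr_ge0 => i _; rewrite -expr2 sqr_ge0.
case: (eqVneq b 0) => [bz|bnz].
  have gz : forall i, g i = 0.
    move=> i.
    have hg : forall j, xpredT j -> 0 <= g j * g j by move=> j _; rewrite -expr2 sqr_ge0.
    have /eqP := @psumr_eq0P R I xpredT (fun i => g i * g i) hg bz i isT.
    by rewrite mulf_eq0 orbb => /eqP.
  rewrite /c big1 ?mul0r ?mulr_ge0 // => i _; by rewrite gz mulr0.
have bp : 0 < b by rewrite lt_def bnz b0.
set t := c / b.
have h : 0 <= \sum_i (f i - t * g i) * (f i - t * g i) by apply: sumr_ge0 => i _; rewrite -expr2 sqr_ge0.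
have e : \sum_i (f i - t * g i) * (f i - t * g i) = a - (1+1) * t * c + t * t * b.
  rewrite /a /c /b mulr_sumr mulr_sumr -!(big_split, sumrN) /=.
  by apply: eq_bigr => i _; rring.
rewrite e in h.
have tb : t * b = c by rewrite /t mulrVK ?unitfE.
have : 0 <= b * (a - (1 + 1) * t * c + t * t * b) by rewrite mulr_ge0.
suff -> : b * (a - (1 + 1) * t * c + t * t * b) = a * b - c * c by rewrite subr_ge0.
have -> : b * (a - (1 + 1) * t * c + t * t * b) = a * b - (1+1) * (t * b) * c + (t * b) * (t * b) by rring.
rewrite tb; rring.
Qed.

Lemma dot_eq0 N (x : 'rV[R]_N) : dotv x x = 0 -> x = 0.
Proof.
move=> h; apply/rowP => k; rewrite mxE.
have hg : forall j, xpredT j -> 0 <= x 0 j * x 0 j by move=> j _; rewrite -expr2 sqr_ge0.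
have /eqP := @psumr_eq0P R _ xpredT (fun j => x 0 j * x 0 j) hg h k isT.
by rewrite mulf_eq0 orbb => /eqP.
Qed.

Lemma dotE N (x y : 'rV[R]_N) : dotv x y = (x *m y^T) 0 0.
Proof. by rewrite mxE; apply: eq_bigr => k _; rewrite mxE. Qed.

Lemma rank_bound n N (v : 'I_n -> 'rV[R]_N) :
  (\sum_i dotv (v i) (v i)) * (\sum_i dotv (v i) (v i)) <=
  (\rank (rows_mx v))%:R * \sum_i \sum_j dotv (v i) (v j) * dotv (v i) (v j).
Proof.
set V := rows_mx v.
have GE : forall i j, (V *m V^T) i j = dotv (v i) (v j).
  by move=> i j; rewrite mxE; apply: eq_bigr => k _; rewrite !mxE.
set r := \rank V.
set B := row_base V.
have [X hX] : exists X, V = X *m B.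
  by apply/submxP; rewrite /B eq_row_base submx_refl.
set BB := B *m B^T.
have BBu : BB \in unitmx.
  rewrite -row_free_unit; apply: inj_row_free => y hy.
  have hyB : y *m B = 0.
    apply: dot_eq0; rewrite dotE trmx_mul mulmxA -(mulmxA y) -/BB hy mul0mx mxE.
    done.
  by apply: (row_free_inj (row_base_free V)); rewrite /= hyB mul0mx.
clearbody B.
set M := invmx BB.
set P := B^T *m M *m B.
have VP : V *m P = V.
  by rewrite hX /P !mulmxA -[X *m B *m B^T]mulmxA -/BB -[X *m BB *m M]mulmxA mulmxV // mulmx1.
have tr1 : \sum_i dotv (v i) (v i) = \tr (V *m V^T).
  by rewrite /mxtrace; apply: eq_bigr => i _; rewrite GE.
set A := V^T *m V.
have tr2 : \tr (V *m V^T) = \sum_k \sum_l A k l * P l k.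
  by rewrite -trE -{1}VP mxtrace_mulC mulmxA.
have trP : \sum_k \sum_l P l k * P l k = r%:R.
  have -> : \sum_k \sum_l P l k * P l k = \tr (P^T *m P).
    by rewrite trE; apply: eq_bigr => k _; apply: eq_bigr => l _; rewrite [P^T k l]mxE.
  rewrite /P !trmx_mul trmxK trmx_inv -/BB.
  have BBt : BB^T = BB by rewrite /BB trmx_mul trmxK.
  by rewrite BBt -/M !mulmxA mxtrace_mulC !mulmxA -/BB mulmxV // mul1mx -/BB mulmxV // mxtrace1.
have trA : \sum_k \sum_l A k l * A k l = \sum_i \sum_j dotv (v i) (v j) * dotv (v i) (v j).
  have -> : \sum_k \sum_l A k l * A k l = \tr (A *m A^T).
    by rewrite trE; apply: eq_bigr => k _; apply: eq_bigr => l _; rewrite [A^T l k]mxE.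
  rewrite /A trmx_mul trmxK -mulmxA mxtrace_mulC !mulmxA -(mulmxA (V *m V^T) V V^T) trE.
  by apply: eq_bigr => i _; apply: eq_bigr => j _; rewrite !GE (dotC (v j)).
rewrite tr1 tr2 -trA -trP [X in _ <= X]mulrC.
have h := CS (fun p : 'I_N * 'I_N => A p.1 p.2) (fun p => P p.2 p.1).
rewrite -(pair_bigA _ (fun k l => A k l * P l k)) -(pair_bigA _ (fun k l => A k l * A k l)) in h.
by rewrite -(pair_bigA _ (fun k l => P l k * P l k)) in h.
Qed.

Lemma sum_delta n (i : 'I_n) (F : 'I_n -> R) : \sum_k (k == i)%:R * F k = F i.
Proof.
rewrite (bigD1 i) //= eqxx mul1r big1 ?addr0 // => k /negbTE ->.
by rewrite mul0r.
Qed.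

Lemma chsh_term n N (p : chsh_row n) (x : 'rV[R]_N) (v : 'I_n -> 'rV[R]_N) :
  \sum_k CHSH R n p k * dotv x (v k) =
  dotv x (v (val p).1.1 + (if (val p).2 then 1 else -1) *: v (val p).1.2) / (2 * n * (n - 1))%:R.
Proof.
rewrite /CHSH dotDr dotZr.
set i := (val p).1.1; set j := (val p).1.2; set sg : R := (if (val p).2 then 1 else -1).
set D := (2 * n * (n - 1))%:R.
transitivity ((\sum_k ((k == i)%:R * dotv x (v k) + sg * ((k == j)%:R * dotv x (v k)))) / D).
  rewrite mulr_suml; apply: eq_bigr => k _. set a := (k == i)%:R; set b := (k == j)%:R; set d := dotv x (v k); set e := D^-1. rring.
by rewrite big_split /= -mulr_sumr !sum_delta.
Qed.

Lemma regroup n (F : 'I_n -> 'I_n -> bool -> R) :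
  \sum_(p : chsh_row n) F (val p).1.1 (val p).1.2 (val p).2 =
  \sum_(i < n) \sum_(j < n | (i < j)%N) (F i j true + F i j false).
Proof.
have step1 : \sum_(p : chsh_row n) F (val p).1.1 (val p).1.2 (val p).2 =
   \sum_(x | chsh_pred n x) F x.1.1 x.1.2 x.2.
  symmetry; rewrite (reindex_omap (val : chsh_row n -> _) insub); last first.
    by move=> x hx; rewrite insubT.
  by apply: eq_bigl => y; rewrite valK eqxx andbT (valP y).
rewrite step1.
have step2 : \sum_(x | chsh_pred n x) F x.1.1 x.1.2 x.2 =
  \sum_(a : 'I_n * 'I_n | (a.1 < a.2)%N) \sum_(s : bool) F a.1 a.2 s.
  rewrite pair_big /=; apply: eq_big => [[a s]|[a s] _] //=.
  by rewrite andbT.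
rewrite step2.
rewrite (pair_big_dep xpredT (fun i j : 'I_n => (i < j)%N) (fun i j : 'I_n => F i j true + F i j false)) /=.
by apply: eq_bigr => a _; rewrite big_bool.
Qed.

Lemma wnorm N (a b : 'rV[R]_N) (s : bool) : dotv a a = 1 -> dotv b b = 1 ->
  dotv (a + (if s then 1 else -1) *: b) (a + (if s then 1 else -1) *: b) =
  2 + 2 * ((if s then 1 else -1) * dotv a b).
Proof.
move=> ha hb; rewrite !dotDl !dotDr !dotZl !dotZr ha hb (dotC b a).
have t : (2:R) = 1 + 1 by [].
rewrite t; set c := dotv a b.
by case: s; rring.
Qed.

Lemma dot_delta n (a b : 'I_n) : dotv (delta_mx 0 a : 'rV[R]_n) (delta_mx 0 b) = (a == b)%:R.
Proof.
rewrite /dotv; transitivity (\sum_k (k == a)%:R * (k == b)%:R :> R).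
  by apply: eq_bigr => k _; rewrite !mxE eqxx.
by rewrite sum_delta.
Qed.

Lemma sym_sum n (G : 'I_n -> 'I_n -> R) : (forall i j, G i j = G j i) ->
  \sum_(i < n) \sum_(j < n) G i j =
  \sum_(i < n) G i i + 2 * \sum_(i < n) \sum_(j < n | (i < j)%N) G i j.
Proof.
move=> hG.
have h1 : forall i : 'I_n, \sum_(j < n) G i j =
   \sum_(j < n | (i < j)%N) G i j + (G i i + \sum_(j < n | (j < i)%N) G i j).
  move=> i; rewrite (bigID (fun j : 'I_n => (i < j)%N)) /=; congr (_ + _).
  rewrite (bigD1 i) /= ?ltnn //; congr (_ + _).
  apply: eq_bigl => j; rewrite -leqNgt ltn_neqAle andbC; congr (_ && _).
rewrite (eq_bigr _ (fun i _ => h1 i)) !big_split /=.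
have h2 : \sum_(i < n) \sum_(j < n | (j < i)%N) G i j = \sum_(i < n) \sum_(j < n | (i < j)%N) G i j.
  rewrite (exchange_big_dep xpredT) //=.
  by apply: eq_bigr => i _; apply: eq_bigr => j _; rewrite hG.
rewrite h2.
have t : (2:R) = 1 + 1 by [].
rewrite t.
set A := \sum_(i < n) G i i; set B := \sum_(i < n) \sum_(j < n | (i < j)%N) G i j.
rring.
Qed.

Lemma final_alg (n r T K : R) : 0 <= r -> 0 <= T -> T <= K -> 0 <= n ->
  n * n <= r * (n + T) -> n - K <= r.
Proof.
move=> r0 T0 TK n0 h.
apply: (le_trans (y := n - T)); first by rewrite lerD2l lerN2.
case: (lerP (n - T) 0) => [h0|hp]; first exact: le_trans h0 r0.
have nT : 0 < n + T.
  have -> : n + T = (n - T) + (T + T) by rring.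
  by apply: (lt_le_trans hp); rewrite lerDl addr_ge0.
rewrite -(ler_pM2r nT).
apply: le_trans h.
have -> : (n - T) * (n + T) = n * n - T * T by rring.
by rewrite lerBlDr lerDl mulr_ge0.
Qed.
Unset Implicit Arguments.

Theorem proposition7p2 (n : nat) (hn : (2 <= n)%N)
  (eps : R) (heps : 0 < eps) (q : R) (hq : is_quantum_bias (CHSH R n) q)
  (N : nat) (u : chsh_row n -> 'rV[R]_N) (v : 'I_n -> 'rV[R]_N)
  (hopt : eps_optimal (CHSH R n) q eps u v) :
  n%:R - 8 * Num.sqrt 2 * n%:R * (n - 1)%:R * eps <= (\rank (rows_mx v))%:R /\
  n%:R - 8 * Num.sqrt 2 * n%:R * (n - 1)%:R * eps <= N%:R.
Proof.
case: hq => hub _.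
case: hopt => [[hu hv] hb].
set D : R := (2 * n * (n - 1))%:R.
have Dp : 0 < D.
  rewrite ltr0n !muln_gt0 /= subn_gt0.
  by apply/andP; split; [apply: leq_trans hn | ].
have Di : 0 <= D^-1 by rewrite invr_ge0 ltW.
set sg := fun s : bool => (if s then 1 else -1 : R).
set c := fun i j => dotv (v i) (v j).
set Sq := fun (i j : 'I_n) (s : bool) => Num.sqrt 2 - Num.sqrt (2 + 2 * (sg s * c i j)).
have hA : bias (CHSH R n) u v <=
    \sum_(p : chsh_row n) Num.sqrt (2 + 2 * (sg (val p).2 * c (val p).1.1 (val p).1.2)) / D.
  rewrite /bias; apply: ler_sum => p _; rewrite chsh_term.
  apply: ler_wpM2r => //.
  rewrite /sg /c -wnorm //.
  exact: dot_CS.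
have s2 : Num.sqrt 2 * Num.sqrt 2 = 2 :> R by rewrite sqrt_sq // ler0n.
have s2n : Num.sqrt (2:R) != 0.
  apply/eqP => h0; move: s2; rewrite h0 mul0r => /eqP; by rewrite eq_sym pnatr_eq0.
have hB : \sum_(p : chsh_row n) Num.sqrt 2 / D <= q.
  apply: hub.
  pose ve := fun k : 'I_n => (delta_mx 0 k : 'rV[R]_n).
  pose ue := fun p : chsh_row n => (Num.sqrt 2)^-1 *: (ve (val p).1.1 + sg (val p).2 *: ve (val p).1.2).
  have hne : forall p : chsh_row n, ((val p).1.1 == (val p).1.2) = false.
    move=> p; apply/negbTE; rewrite -val_eqE neq_ltn.
    by have := valP p; rewrite /chsh_pred => ->.
  have hve : forall k, dotv (ve k) (ve k) = 1 by move=> k; rewrite dot_delta eqxx.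
  have hw : forall p : chsh_row n, dotv (ve (val p).1.1 + sg (val p).2 *: ve (val p).1.2)
      (ve (val p).1.1 + sg (val p).2 *: ve (val p).1.2) = 2.
    by move=> p; rewrite /sg wnorm // dot_delta hne mulr0 mulr0 addr0.
  exists n, ue, ve; split; first split.
  - move=> p; rewrite /ue dotZl dotZr hw mulrA -invfM s2 mulVf //.
    by rewrite pnatr_eq0.
  - exact: hve.
  rewrite /bias; apply: eq_bigr => p _; rewrite chsh_term /ue dotZl hw.
  by congr (_ / _); rewrite -[X in _ = _ * X]s2 mulKf.
have hC : \sum_(p : chsh_row n) Sq (val p).1.1 (val p).1.2 (val p).2 <= eps * D.
  rewrite -ler_pdivrMr // mulr_suml.
  have h := lerB hB (le_trans hb hA).
  have e : q - (q - eps) = eps by rring.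
  rewrite e -sumrB in h; apply: le_trans h.
  by rewrite le_eqVlt; apply/orP; left; apply/eqP/eq_bigr => p _; rewrite /Sq mulrBl.
rewrite (regroup Sq) in hC.
set S2 := \sum_(i < n) \sum_(j < n | (i < j)%N) c i j * c i j.
have h40 : (0:R) <= 4 by rewrite ler0n.
have hE : Num.sqrt 2 * S2 <= 4 * (eps * D).
  apply: (le_trans _ (ler_wpM2l h40 hC)).
  rewrite /S2 !mulr_sumr; apply: ler_sum => i _; rewrite !mulr_sumr; apply: ler_sum => j _.
  rewrite /Sq /sg mul1r mulN1r mulrN.
  apply: key_ineq.
  - have e := wnorm false (hv i) (hv j); simpl in e.
    by have := dot_ge0 (v i + (-1) *: v j); rewrite e mulN1r mulrN.
  - have e := wnorm true (hv i) (hv j); simpl in e.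
    by have := dot_ge0 (v i + 1 *: v j); rewrite e mul1r.
have hS2 : 0 <= S2.
  by apply: sumr_ge0 => i _; apply: sumr_ge0 => j _; rewrite -expr2 sqr_ge0.
have hR := rank_bound v.
have hn1 : \sum_(i < n) dotv (v i) (v i) = n%:R.
  by rewrite (eq_bigr (fun=> 1)) ?sumr_const ?card_ord // => i _; exact: hv i.
have hsym : \sum_(i < n) \sum_(j < n) dotv (v i) (v j) * dotv (v i) (v j) = n%:R + 2 * S2.
  rewrite (sym_sum (G := fun i j => c i j * c i j)); last by move=> i j; rewrite /c dotC.
  congr (_ + _); rewrite -hn1; apply: eq_bigr => i _; by rewrite /c hv mulr1.
rewrite hn1 hsym in hR.
have TK : 2 * S2 <= 8 * Num.sqrt 2 * n%:R * (n - 1)%:R * eps.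
  have -> : 2 * S2 = Num.sqrt 2 * (Num.sqrt 2 * S2) by rewrite mulrA s2.
  apply: (le_trans (ler_wpM2l (sqrtr_ge0 _) hE)).
  have e8 : (8:R) = 4 * 2 by rewrite -natrM.
  have eD : D = 2 * n%:R * (n - 1)%:R by rewrite /D !natrM.
  rewrite e8 eD le_eqVlt; apply/orP; left; apply/eqP.
  set t := Num.sqrt 2; set a := n%:R; set b := (n - 1)%:R; set f : R := 4; set g : R := 2.
  rring.
have r0 : (0:R) <= (\rank (rows_mx v))%:R by rewrite ler0n.
have fin := final_alg r0 (mulr_ge0 (ler0n _ 2) hS2) TK (ler0n _ n) hR.
split => //.
apply: (le_trans fin); rewrite ler_nat; exact: rank_leq_col.
Qed.


End Aux.
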